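(* Let $n\ge1$ and let $f\colon S^1\to\mathbb{R}$ be a smooth function having at least $2n$ local extrema, all of whose critical points are non-degenerate. Then for almost every $v=(x,y,z)\in\mathbb{S}^2\subset\mathbb{R}^3$ with $y^2-4xz>0$, the function $$h_v(t)=x f(t)+y f'(t)+z f''(t)$$ has at least $n$ local maxima on $S^1$.
   Context: $\mathbb{S}^2=\{(x,y,z)\in\mathbb{R}^3: x^2+y^2+z^2=1\}$ with its standard area measure; ''almost every'' refers to this measure. *)

(* Defs.v *)
From HB Require Import structures.
From mathcomp Require Import all_boot all_order all_algebra.
From mathcomp Require Import all_classical all_reals all_analysis.
Set Implicit Arguments. Unset Strict Implicit. Unset Printing Implicit Defensive.
Import Order.TTheory GRing.Theory Num.Theory.
Import numFieldNormedType.Exports.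
Local Open Scope classical_set_scope.
Local Open Scope ring_scope.

(* Functions on S^1 are represented as 2*pi-periodic functions R -> R. *)
Definition periodic2pi {R : realType} (f : R -> R) : Prop :=
  forall t, f (t + 2 * pi) = f t.

Definition smooth {R : realType} (f : R -> R) : Prop :=
  forall (k : nat) (x : R), derivable (derive1n k f) x 1.

Definition is_local_max {R : realType} (h : R -> R) (t : R) : Prop :=
  exists2 e : R, 0 < e & forall s, `|s - t| < e -> h s <= h t.

Definition is_local_min {R : realType} (h : R -> R) (t : R) : Prop :=
  exists2 e : R, 0 < e & forall s, `|s - t| < e -> h t <= h s.

Definition is_local_extremum {R : realType} (h : R -> R) (t : R) : Prop :=
  is_local_max h t \/ is_local_min h t.

(* "h has at least m points with property P on S^1": m distinct points of
   the fundamental domain [0, 2 pi) satisfying P. *)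
Definition at_least_on_circle {R : realType} (m : nat) (P : R -> Prop) : Prop :=
  exists s : seq R, [/\ size s = m, uniq s &
    forall t, t \in s -> [/\ 0 <= t, t < 2 * pi & P t]].

Definition nondegenerate_crit {R : realType} (f : R -> R) : Prop :=
  forall t, derive1n 1 f t = 0 -> derive1n 2 f t != 0.

Definition hv {R : realType} (f : R -> R) (x y z : R) : R -> R :=
  fun t => x * f t + y * derive1n 1 f t + z * derive1n 2 f t.

Definition S2 {R : realType} : set (R * R * R) :=
  [set v | v.1.1 ^+ 2 + v.1.2 ^+ 2 + v.2 ^+ 2 = 1].

Definition sph {R : realType} (p : R * R) : R * R * R :=
  (sin p.2 * cos p.1, sin p.2 * sin p.1, cos p.2).

(* A subset A of S^2 is null for the standard area measure iff its preimage
   under spherical coordinates is Lebesgue-null in R^2 (area measure is the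
   pushforward of sin(ph) dth dph, and sph is a local diffeomorphism off the
   null set {sin ph = 0}). *)
Definition S2_negligible {R : realType} (A : set (R * R * R)) : Prop :=
  ((@lebesgue_measure R) \x (@lebesgue_measure R))%E.-negligible (sph @^-1` A).

(* Main.v *)
Set Warnings "-notation-overridden,-ambiguous-paths,-notation-incompatible-prefix".
Require Import Defs.
From HB Require Import structures.
From mathcomp Require Import all_boot all_order all_algebra.
From mathcomp Require Import all_classical all_reals all_analysis.
Import Order.TTheory GRing.Theory Num.Theory.
Import numFieldNormedType.Exports.
Local Open Scope classical_set_scope.
Local Open Scope ring_scope.
From mathcomp Require Import lra ring zify.
Section S.
Variable R : realType.
Lemma deriv_sign (g : R -> R) (t d : R) : is_derive t 1 g d -> d != 0 ->
  exists2 e : R, 0 < e & forall h, 0 < `|h| < e -> 0 < (g (h + t) - g t) / h * d.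
Proof.
move=> H dn0.
have dv : derivable g t 1 by case: H.
have dval : 'D_1 g t = d by case: H.
have cv : (fun h : R => h^-1 *: ((g \o shift t) (h *: 1) - g t)) @ 0^' --> d.
  rewrite -dval; exact: dv.
have := @cvgr_dist_lt _ _ _ _ _ _ _ cv `|d|; rewrite normr_gt0 dn0 => /(_ _ isT).
move=> /nbhs_ballP [e /= e0 He].
exists e => // h /andP [h0 he].
have := He h.
rewrite /ball /= sub0r normrN => /(_ he).
rewrite -normr_gt0 h0 => /(_ isT).
rewrite /= /shift /=.

move=> Hq.

move: Hq; rewrite [h%:A]mulr1 -[h^-1 *: _]/(h^-1 * _) (mulrC h^-1).
set q := _ / h.
rewrite ltr_norml => /andP [H1 H2].
case: (ltrgtP d 0) dn0 => // dpos _.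
- rewrite ltr0_norm // in H1 H2; rewrite -mulrNN; apply: mulr_gt0; lra.
- rewrite gtr0_norm // in H1 H2; apply: mulr_gt0; lra.
Qed.

Lemma derive1_per (g : R -> R) c : (forall t, g (t + c) = g t) ->
  forall t, derive1 g (t + c) = derive1 g t.
Proof.
move=> gp t; rewrite /derive1 gp.
suff -> : (fun h : R => h^-1 *: (g (h + (t + c)) - g t)) =
  (fun h => h^-1 *: (g (h + t) - g t)) by [].
by apply/funext => h; rewrite addrA gp.
Qed.

Lemma dern_per (g : R -> R) c : (forall t, g (t + c) = g t) ->
  forall k t, derive1n k g (t + c) = derive1n k g t.
Proof.
move=> gp; elim=> [//|k IH] t /=.
exact: (@derive1_per _ _ IH).
Qed.

Lemma is_derive_expl (a s : R) : is_derive s 1 (fun x => expR (a * x)) (a * expR (a * s)).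
Proof.
have dl : forall x : R, is_derive x (1:R) ( *%R a) a.
  move=> x; have := is_deriveZ a (is_derive_id x (1:R)).
  rewrite [a%:A]mulr1; by [].
have dv : derivable (fun x => expR (a * x)) s 1.
  apply/derivable1_diffP.
  apply: (differentiable_comp (f := *%R a) (g := expR)).
    by apply/derivable1_diffP; case: (dl s).
  by apply/derivable1_diffP; case: (is_derive_expR (a * s)).
apply: DeriveDef => //.
rewrite -derive1E.
have -> : (fun x => expR (a * x)) = expR \o ( *%R a) by [].
rewrite derive1_comp; last 2 first.
  by case: (dl s).
  by case: (is_derive_expR (a * s)).
rewrite !derive1E.
have [_ ->] := dl s.
have [_ ->] := is_derive_expR (a * s).
by rewrite mulrC.
Qed.

Lemma exp_mvt (g dg : R -> R) (a u v : R) : (forall t : R, is_derive t (1:R) g (dg t)) ->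
  u < v -> g u * g v < 0 ->
  exists2 w, u < w < v & 0 < (dg w - a * g w) * g v.
Proof.
move=> dg_ uv guv.
pose E := fun x : R => expR (- a * x).
have dE (s : R) : is_derive s (1:R) E (- a * E s) := is_derive_expl (-a) s.
have dk (s : R) : is_derive s (1:R) (E * g) (E s * dg s + g s * (- a * E s)).
  exact: is_deriveM (dE s) (dg_ s).
have cont : {within `[u, v], continuous (E * g)}.
  by apply: derivable_within_continuous => x _; have [] := dk x.
have [w] := MVT (f := E * g) (df := fun s => E s * dg s + g s * (- a * E s)) uv
  (fun x _ => dk x) cont.
rewrite in_itv /= => /andP [uw wv] eq.
exists w; first by rewrite uw wv.
have Ev : 0 < E v by apply: expR_gt0.
have Eu : 0 < E u by apply: expR_gt0.
have Ew : 0 < E w by apply: expR_gt0.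
have gv0 : g v != 0 by apply/eqP => gv0; move: guv; rewrite gv0 mulr0 ltxx.
have key : 0 < (E v * g v - E u * g u) * g v.
  have gv2 : 0 < g v * g v.
    by rewrite lt0r mulf_eq0 orbb gv0 /= -expr2 sqr_ge0.
  have h1 := mulr_gt0 Ev gv2.
  have h2 : 0 < E u * (- (g u * g v)) by apply: mulr_gt0; rewrite // oppr_gt0.
  nra.
move: key; rewrite [E v * g v](_ : _ = (E * g) v) // [E u * g u](_ : _ = (E * g) u) // eq.
have -> : (E w * dg w + g w * (- a * E w)) * (v - u) * g v =
  (E w * (v - u)) * ((dg w - a * g w) * g v) by ring.
by rewrite pmulr_rgt0 // mulr_gt0 // subr_gt0.
Qed.

Lemma sign_sq (n : nat) : (-1) ^+ n * (-1) ^+ n = 1 :> R.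
Proof. by rewrite -exprD -signr_odd addnn odd_double expr0. Qed.

Lemma sign_neg (x y : R) n : 0 < (-1) ^+ n * x -> 0 < (-1) ^+ n.+1 * y -> x * y < 0.
Proof.
rewrite exprS mulN1r; have := sign_sq n; set s := (-1) ^+ n => ss h1 h2.
nra.
Qed.

Lemma sign_pos (d y s : R) : 0 < d * y -> 0 < s * y -> s * s = 1 -> 0 < s * d.
Proof. move=> h1 h2 ss; nra. Qed.

Definition alt (g : R -> R) (m : nat) := exists (p : nat -> R) (k : nat),
  p (2 * m)%N = p 0%N + 2 * pi /\
  forall i, (i < 2 * m)%N -> p i < p i.+1 /\ 0 < (-1) ^+ (i + k) * g (p i).

Lemma alt_sign (g : R -> R) m (p : nat -> R) (k : nat) : (0 < m)%N -> periodic2pi g ->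
  (p (2 * m)%N = p 0%N + 2 * pi) ->
  (forall i, (i < 2 * m)%N -> p i < p i.+1 /\ 0 < (-1) ^+ (i + k) * g (p i)) ->
  forall i, (i <= 2 * m)%N -> 0 < (-1) ^+ (i + k) * g (p i).
Proof.
move=> m0 gp p2m H i; rewrite leq_eqVlt => /orP [/eqP ->|/H []//].
rewrite p2m gp -signr_odd oddD oddM /= signr_odd.
by case: (H 0%N) => //; rewrite muln_gt0.
Qed.

Lemma alt_step (g dg : R -> R) (a : R) m : (0 < m)%N -> periodic2pi g ->
  (forall t : R, is_derive t (1:R) g (dg t)) -> alt g m ->
  alt (fun t => dg t - a * g t) m.
Proof.
move=> m0 gp dg_ [p [k [p2m H]]].
have S := @alt_sign g m p k m0 gp p2m H.
have : forall i, exists w, (i < 2 * m)%N ->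
    p i < w < p i.+1 /\ 0 < (-1) ^+ (i.+1 + k) * (dg w - a * g w).
  move=> i; case: (ltnP i (2 * m)) => hi; last by exists 0.
  have [lt si] := H i hi.
  have si1 := S i.+1 hi.
  have neg : g (p i) * g (p i.+1) < 0.
    by apply: (@sign_neg _ _ (i + k)%N) => //; rewrite -addSn.
  have [w wI wpos] := @exp_mvt _ _ a _ _ dg_ lt neg.
  exists w => _; split => //.
  exact: (@sign_pos _ _ _ wpos si1 (sign_sq _)).
case/choice => w Hw.
exists (fun i => if i == (2 * m)%N then w 0%N + 2 * pi else w i), k.+1.
split.
  by rewrite eqxx eq_sym eqn0Ngt muln_gt0 m0.
move=> i hi; rewrite (ltn_eqF hi).
have [/andP [l1 l2] s1] := Hw i hi.
split; last by rewrite addnS -addSn; exact: s1.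
case: eqP => [e|ne].
  have h0 : (0 < 2 * m)%N by rewrite muln_gt0.
  have [/andP [w0 _] _] := Hw 0%N h0.
  by move: l2; rewrite e p2m => l2; lra.
have hi1 : (i.+1 < 2 * m)%N by rewrite ltn_neqAle hi andbT; apply/eqP.
have [/andP [l3 _] _] := Hw i.+1 hi1.
lra.
Qed.

Lemma alt_scale (g : R -> R) (c : R) m : c != 0 -> alt g m -> alt (fun t => c * g t) m.
Proof.
move=> c0 [p [k [p2m H]]].
case: (ltrgtP c 0) c0 => // cs _.
- exists p, k.+1; split => // i hi; have [l s1] := H i hi; split => //.
  have -> : (-1) ^+ (i + k.+1) * (c * g (p i)) = (- c) * ((-1) ^+ (i + k) * g (p i)).
    by rewrite addnS exprS; ring.
  by apply: mulr_gt0 => //; rewrite oppr_gt0.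
- exists p, k; split => // i hi; have [l s1] := H i hi; split => //.
  have -> : (-1) ^+ (i + k) * (c * g (p i)) = c * ((-1) ^+ (i + k) * g (p i)) by ring.
  by apply: mulr_gt0.
Qed.

Lemma alt_ext (g g' : R -> R) m : (forall t, g t = g' t) -> alt g m -> alt g' m.
Proof.
move=> e [p [k [p2m H]]]; exists p, k; split => // i hi.
by rewrite -e; apply: H.
Qed.

Lemma interior_max (h dh : R -> R) (u v : R) : (forall t : R, is_derive t (1:R) h (dh t)) ->
  u < v -> 0 < dh u -> dh v < 0 -> exists2 c, u < c < v & is_local_max h c.
Proof.
move=> dh_ uv du dv.
have cont : {within `[u, v], continuous h}.
  by apply: derivable_within_continuous => x _; have [] := dh_ x.
have [c cI cmax] := EVT_max (ltW uv) cont.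
move: cI; rewrite in_itv /= => /andP [uc cv].
have [e1 e10 He1] := @deriv_sign _ _ _ (dh_ u) (lt0r_neq0 du).
have [e2 e20 He2] := @deriv_sign _ _ _ (dh_ v) (ltr0_neq0 dv).
have [M1p M1e M1v] : [/\ 0 < Num.min e1 (v - u), Num.min e1 (v - u) <= e1 & Num.min e1 (v - u) <= v - u].
  by rewrite lt_min e10 subr_gt0 uv !ge_min !lexx ?orbT.
have [M2p M2e M2v] : [/\ 0 < Num.min e2 (v - u), Num.min e2 (v - u) <= e2 & Num.min e2 (v - u) <= v - u].
  by rewrite lt_min e20 subr_gt0 uv !ge_min !lexx ?orbT.
set d1 := Num.min e1 (v - u) / 2.
set d2 := Num.min e2 (v - u) / 2.
have d1p : 0 < d1 by rewrite /d1; lra.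
have d1e : d1 < e1 by rewrite /d1; lra.
have d1v : d1 < v - u by rewrite /d1; lra.
have d2p : 0 < d2 by rewrite /d2; lra.
have d2e : d2 < e2 by rewrite /d2; lra.
have d2v : d2 < v - u by rewrite /d2; lra.
have h1 := He1 d1; rewrite gtr0_norm // d1p d1e /= in h1.
have h2 := He2 (- d2); rewrite normrN gtr0_norm // d2p d2e /= in h2.
have := h1 isT; rewrite pmulr_lgt0 // pmulr_lgt0 ?invr_gt0 // => hu.
have := h2 isT; rewrite nmulr_lgt0 // nmulr_llt0 ?invr_lt0 ?oppr_lt0 // => hv.
have hv' : h (- d2 + v) > h v by move: hv; rewrite subr_gt0.
have hu' : h (d1 + u) > h u by move: hu; rewrite subr_gt0.
have cu : u < c.
  rewrite lt_neqAle uc andbT; apply/eqP => cu.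
  have := cmax (d1 + u); rewrite in_itv /= -cu; move=> /(_ _) H.
  have : h (d1 + u) <= h u by apply: H; apply/andP; split; lra.
  lra.
have cv' : c < v.
  rewrite lt_neqAle cv andbT; apply/eqP => cv'.
  have := cmax (- d2 + v); rewrite in_itv /= cv'; move=> /(_ _) H.
  have : h (- d2 + v) <= h v by apply: H; apply/andP; split; lra.
  lra.
exists c; first by rewrite cu cv'.
exists (Num.min (c - u) (v - c)); first by rewrite lt_min !subr_gt0 cu cv'.
move=> s; rewrite lt_min => /andP [s1 s2]; apply: cmax.
rewrite in_itv /=; move: s1 s2; rewrite !ltr_norml => /andP [a1 a2] /andP [a3 a4].
apply/andP; split; lra.
Qed.

Lemma per_nat (h : R -> R) : periodic2pi h -> forall (n : nat) t, h (t + n%:R * (2 * pi)) = h t.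
Proof.
move=> hp; elim=> [|n IH] t; first by rewrite mul0r addr0.
by rewrite -natr1 mulrDl mul1r addrA hp IH.
Qed.

Lemma per_int (h : R -> R) : periodic2pi h -> forall (z : int) t, h (t + z%:~R * (2 * pi)) = h t.
Proof.
move=> hp [n|n] t; first by rewrite pmulrn per_nat.
rewrite NegzE mulrNz pmulrn mulNr.
by rewrite -[in RHS](subrK (n.+1%:R * (2 * pi)) t) per_nat.
Qed.

Lemma locmax_shift (h : R -> R) d c : (forall s, h (s + d) = h s) ->
  is_local_max h c -> is_local_max h (c + d).
Proof.
move=> hp [e e0 He]; exists e => // s hs.
rewrite hp -(subrK d s) hp; apply: He.
by have -> : s - d - c = s - (c + d) by ring.
Qed.

Lemma int_between (z : int) : 0 < (z%:~R : R) -> (z%:~R : R) < 1 -> False.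
Proof.
rewrite ltr0z gtz0_ge1 -(ler1z R) => h1 h2; lra.
Qed.

Lemma alt_max (h dh : R -> R) m : (0 < m)%N -> periodic2pi h -> periodic2pi dh ->
  (forall t : R, is_derive t (1:R) h (dh t)) -> alt dh m ->
  at_least_on_circle m (is_local_max h).
Proof.
move=> m0 hp dhp dh_ [p [k [p2m H]]].
have S := @alt_sign dh m p k m0 dhp p2m H.
have mono : forall i j, (i <= j)%N -> (j <= 2 * m)%N -> p i <= p j.
  move=> i; elim=> [|j IH] ij jm; first by rewrite leqn0 in ij; rewrite (eqP ij).
  rewrite leq_eqVlt in ij; case/orP: ij => [/eqP -> //| ij].
  apply: le_trans (IH ij (ltnW jm)) _; exact: ltW (H j jm).1.
have hb : (odd k <= 1)%N by case: (odd k).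
have key : forall j, exists c, (j < m)%N ->
    p (2 * j + odd k)%N < c < p (2 * j + odd k).+1 /\ is_local_max h c.
  move=> j; case: (ltnP j m) => hj; last by exists 0.
  have hi : (2 * j + odd k < 2 * m)%N by lia.
  have s1 := S _ (ltnW hi).
  have s2 := S _ hi.
  have e1 : (-1) ^+ (2 * j + odd k + k) = 1 :> R.
    by rewrite -signr_odd !oddD /=; case: (odd j); case: (odd k).
  have e2 : (-1) ^+ ((2 * j + odd k).+1 + k) = -1 :> R.
    by rewrite -signr_odd addSn /= !oddD /=; case: (odd j); case: (odd k).
  rewrite e1 mul1r in s1; rewrite e2 mulN1r oppr_gt0 in s2.
  have [c cI cmax] := @interior_max _ _ _ _ dh_ (H _ hi).1 s1 s2.
  by exists c.
case/choice: key => c Hc.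
pose P : R := 2 * pi.
have P0 : 0 < P by rewrite /P mulr_gt0 // pi_gt0.
pose z := fun j => Num.floor (c j / P).
pose r := fun j => c j - (z j)%:~R * P.
have cbnd : forall j, (j < m)%N -> p 0%N < c j < p 0%N + P.
  move=> j hj; have [/andP [l1 l2] _] := Hc j hj.
  have a1 := mono 0%N (2 * j + odd k)%N isT (ltac:(lia)).
  have a2 := mono (2 * j + odd k).+1 (2 * m)%N (ltac:(lia)) (leqnn _).
  rewrite p2m in a2; apply/andP; split; rewrite /P; lra.
have cord : forall j j', (j < j')%N -> (j' < m)%N -> c j < c j'.
  move=> j j' jj hj'.
  have hj : (j < m)%N by lia.
  have [/andP [_ l2] _] := Hc j hj.
  have [/andP [l3 _] _] := Hc j' hj'.
  have := mono (2 * j + odd k).+1 (2 * j' + odd k)%N (ltac:(lia)) (ltac:(lia)).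
  lra.
have rprop : forall j, (j < m)%N -> [/\ 0 <= r j, r j < P & is_local_max h (r j)].
  move=> j hj; split.
  - rewrite /r subr_ge0 -ler_pdivlMr //; exact: floor_le.
  - have fu : c j / P < (z j + 1)%:~R by rewrite -floor_lt_int ltzD1.
    rewrite ltr_pdivrMr // intrD mulrDl mul1r in fu.
    rewrite /r; lra.
  - have -> : r j = c j + (- z j)%:~R * P by rewrite /r mulrNz mulNr.
    apply: locmax_shift; first by move=> s; exact: per_int.
    by have [_ ] := Hc j hj.
have rne : forall j j', (j < j')%N -> (j' < m)%N -> r j != r j'.
  move=> j j' jj hj'; apply/eqP => e.
  have hj : (j < m)%N by lia.
  have := cord j j' jj hj'; have := cbnd j hj; have := cbnd j' hj'.
  move=> /andP [b1 b2] /andP [b3 b4] cc.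
  have d : c j' - c j = (z j' - z j)%:~R * P.
    by move: e; rewrite /r intrB mulrBl => e; lra.
  apply: (@int_between (z j' - z j)).
    by rewrite -(pmulr_lgt0 _ P0) -d subr_gt0.
  by rewrite -(ltr_pM2r P0) mul1r -d; lra.
exists (map r (iota 0 m)); split.
- by rewrite size_map size_iota.
- rewrite map_inj_in_uniq ?iota_uniq // => j j'; rewrite !mem_iota !add0n => /andP [_ hj] /andP [_ hj'] e.
  case: (ltngtP j j') => // jj.
  + by move: (rne j j' jj hj'); rewrite e eqxx.
  + by move: (rne j' j jj hj); rewrite e eqxx.
- move=> t /mapP [j]; rewrite mem_iota add0n => /andP [_ hj] ->.
  by have [? ? ?] := rprop j hj; split.
Qed.

Lemma lin2 (g1 g2 : R -> R) (a b t d1 d2 : R) :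
  is_derive t (1:R) g1 d1 -> is_derive t (1:R) g2 d2 ->
  is_derive t (1:R) (fun s => a * g1 s + b * g2 s) (a * d1 + b * d2).
Proof.
move=> H1 H2; have := is_deriveD (is_deriveZ a H1) (is_deriveZ b H2).
by [].
Qed.

Lemma pick_h (q : nat) (d M : R) : d != 0 -> 0 < M ->
  exists h, `|h| = M /\ 0 < (-1) ^+ q * h * d.
Proof.
move=> d0 M0; have ss := sign_sq q.
have nq : `|(-1) ^+ q : R| = 1 := normr_sign _ _.
case: (ltrgtP d 0) d0 => // dp _.
- exists (- ((-1) ^+ q * M)); split; first by rewrite normrN normrM nq mul1r gtr0_norm.
  have -> : (-1) ^+ q * - ((-1) ^+ q * M) * d = ((-1) ^+ q * (-1) ^+ q) * (M * - d) by ring.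
  by rewrite ss mul1r mulr_gt0 // oppr_gt0.
- exists ((-1) ^+ q * M); split; first by rewrite normrM nq mul1r gtr0_norm.
  have -> : (-1) ^+ q * ((-1) ^+ q * M) * d = ((-1) ^+ q * (-1) ^+ q) * (M * d) by ring.
  by rewrite ss mul1r mulr_gt0.
Qed.

Lemma sign3 (y h d s : R) : 0 < y / h * d -> 0 < s * h * d -> s * s = 1 -> 0 < s * y.
Proof.
move=> H1 H2 ss.
have h0 : h != 0 by apply/eqP => h0; move: H2; rewrite h0 mulr0 mul0r ltxx.
have d0 : d != 0 by apply/eqP => d0; move: H2; rewrite d0 mulr0 ltxx.
have := mulr_gt0 H1 H2.
have -> : y / h * d * (s * h * d) = (s * y) * (d * d).
  by field.
rewrite pmulr_lgt0 //.
by rewrite lt0r mulf_eq0 orbb d0 /= -expr2 sqr_ge0.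
Qed.

Lemma near_sign (f : R -> R) (t : R) : smooth f -> nondegenerate_crit f ->
  is_local_extremum f t -> forall (dl : R) (q : nat), 0 < dl ->
  exists u, `|u - t| < dl /\ 0 < (-1) ^+ q * derive1n 1 f u.
Proof.
move=> fs fnd ext dl q dl0.
have fd : forall s, derivable f s 1 := fun s => fs 0%N s.
have f1t : derive1n 1 f t = 0.
  have : is_derive t (1:R) f 0.
    case: ext => [[e e0 He]|[e e0 He]].
    - apply: (@derive1_at_max _ f (t - e) (t + e)).
      + lra.
      + by move=> s _; exact: fd.
      + rewrite in_itv /=; apply/andP; split; lra.
      + move=> s; rewrite in_itv /= => /andP [s1 s2]; apply: He.
        rewrite ltr_norml; apply/andP; split; lra.
    - apply: (@derive1_at_min _ f (t - e) (t + e)).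
      + lra.
      + by move=> s _; exact: fd.
      + rewrite in_itv /=; apply/andP; split; lra.
      + move=> s; rewrite in_itv /= => /andP [s1 s2]; apply: He.
        rewrite ltr_norml; apply/andP; split; lra.
  by case => _ <-; rewrite /= derive1E.
have f2t := fnd t f1t.
have D : is_derive t (1:R) (derive1n 1 f) (derive1n 2 f t).
  have := derivableP (fs 1%N t); by rewrite /= derive1E.
have [e e0 He] := @deriv_sign _ _ _ D f2t.
have M0 : 0 < Num.min e dl / 2 by rewrite divr_gt0 // lt_min e0 dl0.
have [Me Md] : Num.min e dl <= e /\ Num.min e dl <= dl by rewrite !ge_min !lexx ?orbT.
have [h [hn hs]] := @pick_h q _ _ f2t M0.
exists (h + t); split; first by rewrite addrK hn; lra.
apply: (@sign3 _ h (derive1n 2 f t)) => //; last exact: sign_sq.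
have := He h; rewrite hn f1t subr0; apply; apply/andP; split => //; lra.
Qed.

Lemma min_pos (G : nat -> R) m : (forall i, (i < m)%N -> 0 < G i) ->
  exists2 d, 0 < d & forall i, (i < m)%N -> d < G i.
Proof.
elim: m => [|m IH] H; first by exists 1.
have [d d0 Hd] := IH (fun i hi => H i (leqW hi)).
have Gm := H m (ltnSn m).
exists (Num.min d (G m / 2)).
  by rewrite lt_min d0 divr_gt0.
move=> i; rewrite ltnS leq_eqVlt => /orP [/eqP ->|hi].
  rewrite gt_min; apply/orP; right; lra.
by rewrite gt_min Hd.
Qed.

Lemma ext_alt (f : R -> R) n : (0 < n)%N -> smooth f -> periodic2pi f ->
  at_least_on_circle (2 * n) (is_local_extremum f) -> nondegenerate_crit f ->
  alt (derive1n 1 f) n.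
Proof.
move=> n0 fs fp [s0 [sz un Hs]] fnd.
pose P : R := 2 * pi.
have P0 : 0 < P by rewrite /P mulr_gt0 // pi_gt0.
pose s := sort <=%R s0.
have ss : sorted <%R s.
  by rewrite lt_sorted_uniq_le sort_uniq un sort_sorted //; exact: le_total.
have szs : size s = (2 * n)%N by rewrite size_sort.
have mem : forall i, (i < 2 * n)%N ->
    [/\ 0 <= nth 0 s i, nth 0 s i < P & is_local_extremum f (nth 0 s i)].
  move=> i hi; apply: Hs; rewrite -(mem_sort <=%R); apply: mem_nth; by rewrite szs.
have lt : forall i j, (i < j)%N -> (j < 2 * n)%N -> nth 0 s i < nth 0 s j.
  move=> i j ij jn.
  by rewrite (lt_sorted_ltn_nth 0 ss) // inE szs //; apply: ltn_trans ij jn.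
pose T := fun i => if i == (2 * n)%N then nth 0 s 0 + P else nth 0 s i.
have n2 : (0 < 2 * n)%N by rewrite muln_gt0.
have gap : forall i, (i < 2 * n)%N -> 0 < T i.+1 - T i.
  move=> i hi; rewrite /T (ltn_eqF hi) subr_gt0.
  case: eqP => [e|ne].
    have [a1 _ _] := mem 0%N n2; have [_ a2 _] := mem i hi; lra.
  apply: lt => //; rewrite ltn_neqAle hi andbT; exact/eqP.
have [d d0 Hd] := @min_pos _ _ gap.
have : forall i, exists u, (i < 2 * n)%N ->
    `|u - T i| < d / 2 /\ 0 < (-1) ^+ i * derive1n 1 f u.
  move=> i; case: (ltnP i (2 * n)) => hi; last by exists 0.
  have [_ _ ext] := mem i hi.
  have d2 : 0 < d / 2 by rewrite divr_gt0.
  have [u [u1 u2]] := @near_sign _ _ fs fnd ext _ i d2.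
  by exists u; rewrite /T (ltn_eqF hi).
case/choice => q Hq.
exists (fun i => if i == (2 * n)%N then q 0%N + P else q i), 0%N.
split; first by rewrite eqxx eq_sym (negbTE (lt0n_neq0 n2)).
move=> i hi; rewrite (ltn_eqF hi) addn0.
have [a1 a2] := Hq i hi; split => //.
have g := Hd i hi.
have [b1 _] := Hq 0%N n2.
move: a1 b1; rewrite !ltr_norml => /andP [a1 a1'] /andP [b1 b1'].
case: eqP => [e|ne].
  move: g; rewrite /T e eqxx (ltn_eqF hi) => g.
  move: a1 a1'; rewrite /T (ltn_eqF hi) => a1 a1'.
  move: b1 b1'; rewrite /T (ltn_eqF n2) => b1 b1'.
  lra.
have hi1 : (i.+1 < 2 * n)%N by rewrite ltn_neqAle hi andbT; apply/eqP.
have [c1 _] := Hq i.+1 hi1.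
move: c1; rewrite ltr_norml => /andP [c1 c1'].
lra.
Qed.
End S.
Theorem lemma4p1 (R : realType) (n : nat) (hn : (1 <= n)%N) (f : R -> R)
  (fsmooth : smooth f) (fper : periodic2pi f)
  (fext : at_least_on_circle (2 * n)%N (is_local_extremum f))
  (fnd : nondegenerate_crit f) :
  S2_negligible
    [set v : R * R * R | S2 v /\ 0 < v.1.2 ^+ 2 - 4 * v.1.1 * v.2 /\
       ~ at_least_on_circle n (is_local_max (hv f v.1.1 v.1.2 v.2))].
Proof.
have D : forall k (t : R), is_derive t (1:R) (derive1n k f) (derive1n k.+1 f t).
  by move=> k t; have := derivableP (fsmooth k t); rewrite /= derive1E.
have Pk : forall k, periodic2pi (derive1n k f).
  by move=> k t; apply: dern_per.
have a0 := @ext_alt R f n hn fsmooth fper fext fnd.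
have main : forall x y z : R, 0 < y ^+ 2 - 4 * x * z ->
    at_least_on_circle n (is_local_max (hv f x y z)).
  move=> x y z disc.
  pose dh := fun t => 1 * (x * derive1n 1 f t + y * derive1n 2 f t) + z * derive1n 3 f t.
  have dh_ : forall t : R, is_derive t (1:R) (hv f x y z) (dh t).
    move=> t; have h1 := @lin2 R _ _ x y _ _ _ (D 0%N t) (D 1%N t).
    have h2 := @lin2 R _ _ 1 z _ _ _ h1 (D 2%N t).
    have e : hv f x y z = (fun s => 1 * (x * derive1n 0 f s + y * derive1n 1 f s) + z * derive1n 2 f s).
      by apply/funext => s; rewrite /hv /= mul1r.
    by rewrite e.
  have hper : periodic2pi (hv f x y z).
    by move=> t; rewrite /hv fper (Pk 1%N) (Pk 2%N).
  have dhper : periodic2pi dh.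
    by move=> t; rewrite /dh (Pk 1%N) (Pk 2%N) (Pk 3%N).
  apply: (@alt_max R _ _ n hn hper dhper dh_).
  have [z0|z0] := eqVneq z 0.
    have y0 : y != 0.
      apply/eqP => y0; move: disc; rewrite y0 z0; lra.
    pose a' := - x / y.
    have a1 := @alt_step R _ _ a' n hn (Pk 1%N) (D 1%N) a0.
    have a2 := @alt_scale R _ _ _ y0 a1.
    apply: (@alt_ext R _ _ _ _ a2) => t; rewrite /dh z0 /a'.
    move: (derive1n 1 f t) (derive1n 2 f t) (derive1n 3 f t) => u1 u2 u3.
    by field.
  pose sq := Num.sqrt (y ^+ 2 - 4 * x * z).
  have sq2 : sq ^+ 2 = y ^+ 2 - 4 * x * z by rewrite sqr_sqrtr // ltW.
  pose a := (- y + sq) / (2 * z).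
  pose b := (- y - sq) / (2 * z).
  have two0 : (2:R) != 0 by rewrite pnatr_eq0.
  have z2 : 2 * z != 0 by rewrite mulf_eq0 negb_or two0.
  have hab : a + b = - y / z by rewrite /a /b; field.
  have hab2 : a * b = x / z.
    have -> : a * b = (y ^+ 2 - sq ^+ 2) / (4 * z ^+ 2) by rewrite /a /b; field.
    by rewrite sq2; field.
  have a1 := @alt_step R _ _ b n hn (Pk 1%N) (D 1%N) a0.
  pose g1 := fun s => 1 * derive1n 2 f s + - b * derive1n 1 f s.
  have a1' : alt R g1 n.
    apply: (@alt_ext R _ _ _ _ a1) => t; rewrite /g1.
    move: (derive1n 1 f t) (derive1n 2 f t) => u1 u2; by ring.
  have Dg1 : forall t : R, is_derive t (1:R) g1 (1 * derive1n 3 f t + - b * derive1n 2 f t).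
    by move=> t; exact: (@lin2 R _ _ 1 (- b) _ _ _ (D 2%N t) (D 1%N t)).
  have g1per : periodic2pi g1.
    by move=> t; rewrite /g1 (Pk 1%N) (Pk 2%N).
  have a2 := @alt_step R _ _ a n hn g1per Dg1 a1'.
  have a3 := @alt_scale R _ _ _ z0 a2.
  apply: (@alt_ext R _ _ _ _ a3) => t; rewrite /dh /g1.
  move: (derive1n 1 f t) (derive1n 2 f t) (derive1n 3 f t) => u1 u2 u3.
  have -> : z * (1 * u3 + - b * u2 - a * (1 * u2 + - b * u1)) =
    z * u3 - z * (a + b) * u2 + z * (a * b) * u1 by ring.
  by rewrite hab hab2; field.
rewrite /S2_negligible.
have -> : [set v : R * R * R | S2 v /\ 0 < v.1.2 ^+ 2 - 4 * v.1.1 * v.2 /\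
       ~ at_least_on_circle n (is_local_max (hv f v.1.1 v.1.2 v.2))] = set0.
  apply/seteqP; split => // v [_ [disc nal]]; exfalso; exact: nal (main _ _ _ disc).
by rewrite preimage_set0; exact: negligible_set0.
Qed.
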